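(* For all positive integers $m_1,\dots,m_S$, $B(m_1,\dots,m_S)$ equals the coefficient of $x_1^{m_1}\cdots x_S^{m_S}$ in the Taylor expansion at the origin of $$F_B(x_1,\dots,x_S)=\frac{x_1\cdots x_S}{(1-x_1)\cdots(1-x_S)(1-x_1-\dots-x_S)}.$$
   Context: For nonnegative integers $n_1,\dots,n_S$, $E(n_1,\dots,n_S)$ denotes the number of block derangements: $S$ players hold $n_1,\dots,n_S$ distinct cards respectively; all $N=n_1+\dots+n_S$ cards are redealt so that player $j$ again receives exactly $n_j$ cards (only which cards each player gets matters); $E$ counts the deals in which no player receives any card he originally held. Equivalently, $E(n_1,\dots,n_S)$ is the coefficient of $x_1^{n_1}\cdots x_S^{n_S}$ in $\prod_{j=1}^S(x_1+\dots+x_S-x_j)^{n_j}$. By convention $E(0,\dots,0)=1$. For positive integers $m_1,\dots,m_S$, $B(m_1,\dots,m_S)=\sum_{k_1=1}^{m_1}\cdots\sum_{k_S=1}^{m_S}\binom{m_1}{k_1}\cdots\binom{m_S}{k_S}E(k_1-1,\dots,k_S-1)$. *)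

(* Defs.v *)
From HB Require Import structures.
From mathcomp Require Import all_boot all_order all_algebra.
Set Implicit Arguments. Unset Strict Implicit. Unset Printing Implicit Defensive.
Import Order.TTheory GRing.Theory Num.Theory.

(* Multi-indices (exponent vectors) for S variables x_0..x_{S-1}. *)
Definition mono (S : nat) := {ffun 'I_S -> nat}.

(* ---------- Block derangements (combinatorial definition) ----------
   Player j holds the cards (j, k) for k < n j.  A deal assigns to every card
   the player receiving it; player j must receive exactly n j cards, and no
   card may go back to its original holder. *)
Definition card_t (S : nat) (n : mono S) := {j : 'I_S & 'I_(n j)}.

Definition E (S : nat) (n : mono S) : nat :=
  #|[set d : {ffun card_t n -> 'I_S} |
      [forall c, d c != tag c] &&
      [forall j : 'I_S, #|[set c | d c == j]| == n j]]|.

(* B(m) = sum_{1<=k_i<=m_i} prod_i binom(m_i,k_i) E(k_1-1,...,k_S-1).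
   The k_i range over 'I_(sum m).+1 (a bound large enough for every k_i <= m_i). *)
Definition B (S : nat) (m : mono S) : nat :=
  \sum_(k : {ffun 'I_S -> 'I_(\sum_i m i).+1} |
          [forall i, (1 <= k i) && (k i <= m i)])
     (\prod_i 'C(m i, k i)) * E [ffun i => (k i).-1].

Definition series (S : nat) := mono S -> rat.

Local Open Scope ring_scope.

Definition ps_zero S : series S := fun _ => 0.
Definition ps_one S : series S := fun a => ((a == [ffun => 0%N]) : bool)%:R.
Definition ps_X S (i : 'I_S) : series S :=
  fun a => ((a == [ffun j => ((j == i) : nat)]) : bool)%:R.
Definition ps_add S (f g : series S) : series S := fun a => f a + g a.
Definition ps_sub S (f g : series S) : series S := fun a => f a - g a.
Definition ps_mul S (f g : series S) : series S := fun m =>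
  \sum_(a : {ffun 'I_S -> 'I_(\sum_i m i).+1} | [forall i, a i <= m i]%N)
     f [ffun i => nat_of_ord (a i)] * g [ffun i => (m i - a i)%N].
Definition ps_prod S (fs : seq (series S)) : series S := foldr (@ps_mul S) (@ps_one S) fs.
Definition ps_sum S (fs : seq (series S)) : series S := foldr (@ps_add S) (@ps_zero S) fs.

Definition FB_num S : series S := ps_prod [seq ps_X i | i <- enum 'I_S].
Definition FB_den S : series S :=
  ps_mul (ps_prod [seq ps_sub (@ps_one S) (ps_X i) | i <- enum 'I_S])
         (ps_sub (@ps_one S) (ps_sum [seq ps_X i | i <- enum 'I_S])).

(* G is the Taylor expansion at the origin of F_B = FB_num / FB_den
   (the denominator has constant term 1, so such G is unique). *)
Definition is_FB_expansion S (G : series S) : Prop :=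
  forall a, ps_mul G (@FB_den S) a = @FB_num S a.

(* Main.v *)
Require Import Defs.
From HB Require Import structures.
From mathcomp Require Import all_boot all_order all_algebra.
From mathcomp Require Import mpoly.
From mathcomp Require Import zify ring.
Set Implicit Arguments. Unset Strict Implicit. Unset Printing Implicit Defensive.
Import Order.TTheory GRing.Theory Num.Theory.
Local Open Scope ring_scope.

Section Main.
Variable S : nat.
Notation poly := {mpoly rat[S]}.
Implicit Types (p q : poly).

Definition tof (a : 'X_{1..S}) : mono S := [ffun i => a i].
Definition tom (a : mono S) : 'X_{1..S} := [multinom a i | i < S].
Lemma tomE a i : tom a i = a i. Proof. by rewrite mnmE. Qed.
Lemma tofK : cancel tof tom.
Proof. by move=> a; apply/mnmP => i; rewrite tomE ffunE. Qed.
Lemma tomK : cancel tom tof.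
Proof. by move=> a; apply/ffunP => i; rewrite ffunE tomE. Qed.
Lemma mdeg_tom a : mdeg (tom a) = (\sum_i a i)%N.
Proof. by rewrite mdegE; apply eq_bigr => i _; exact: tomE. Qed.

Lemma coefXM u q a :
  ('X_[u] * q)@_a = if (u <= a)%MM then q@_(a - u)%MM else 0.
Proof.
case: ifP => ua.
  by rewrite -{1}(submK ua) addmC mulrC mcoeffMX.
apply/eqP; apply: contraFT ua; rewrite -mcoeff_msupp mulrC.
rewrite (perm_mem (msuppMX q u)) => /mapP [m' _ ->]; exact: lem_addr.
Qed.

Lemma coefM p q (a : mono S) :
  (p * q)@_(tom a) =
  \sum_(b : {ffun 'I_S -> 'I_(\sum_i a i).+1} | [forall i, b i <= a i]%N)
     p@_(tom [ffun i => nat_of_ord (b i)]) * q@_(tom [ffun i => (a i - b i)%N]).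
Proof.
rewrite {1}(mpolyE p) big_distrl /= raddf_sum /=.
under eq_bigr do rewrite -scalerAl mcoeffZ coefXM.
under [RHS]eq_bigr do rewrite {1}(mpolyE p) raddf_sum big_distrl /=.
rewrite exchange_big /=; apply: eq_bigr => u _.
case: ifP => ua.
- have hu i : (u i < (\sum_i a i).+1)%N.
    rewrite ltnS; apply: leq_trans (mnm_lepP ua i) _.
    by rewrite tomE (bigD1 i) //= leq_addr.
  rewrite (bigD1 [ffun i => Ordinal (hu i)]) /=; last first.
    by apply/forallP => i; rewrite ffunE /= -(tomE a); exact: (mnm_lepP ua).
  rewrite [X in _ + X]big1 ?addr0.
    rewrite mcoeffZ mcoeffX.
    have -> : tom [ffun i => nat_of_ord ([ffun i0 => Ordinal (hu i0)] i)] = u.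
      by apply/mnmP => i; rewrite tomE !ffunE.
    rewrite eqxx mulr1; congr (_ * _); congr (_@__).
    by apply/mnmP => i; rewrite mnmBE !tomE !ffunE.
  move=> b /andP [_ hb]; rewrite mcoeffZ mcoeffX.
  case: eqP => [eub|]; last by rewrite mulr0 mul0r.
  exfalso; move/negP: hb; apply; apply/eqP/ffunP => i; apply/val_inj.
  by rewrite !ffunE /= eub tomE ffunE.
- rewrite mulr0 big1 // => b /forallP hb; rewrite mcoeffZ mcoeffX.
  idtac.
  case: eqP => [eub|]; last by rewrite mulr0 mul0r.
  move/negP: ua; case; apply/mnm_lepP => i.
  by rewrite eub tomE ffunE tomE; exact: hb.
Qed.

Definition cong (d : nat) p q := forall a : 'X_{1..S}, (mdeg a <= d)%N -> p@_a = q@_a.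

Lemma mdeg_le (a : mono S) (b : 'I_S -> nat) :
  (forall i, b i <= a i)%N -> (mdeg (tom [ffun i => b i]) <= \sum_i a i)%N.
Proof. by move=> h; rewrite mdeg_tom; apply: leq_sum => i _; rewrite ffunE. Qed.

Lemma mdeg_split (a : mono S) (b : 'I_S -> nat) :
  (forall i, b i <= a i)%N ->
  (mdeg (tom [ffun i => b i]) + mdeg (tom [ffun i => a i - b i]) = \sum_i a i)%N.
Proof.
move=> h; rewrite !mdeg_tom -big_split /=; apply: eq_bigr => i _.
by rewrite !ffunE subnKC.
Qed.

Lemma congM d p p' q q' : cong d p p' -> cong d q q' -> cong d (p * q) (p' * q').
Proof.
move=> hp hq a ha; rewrite -(tofK a) !coefM; apply: eq_bigr => b /forallP hb.
have e : (\sum_i tof a i)%N = mdeg a by rewrite -mdeg_tom tofK.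
rewrite hp ?hq //.
  by apply: leq_trans ha; rewrite -e; apply: mdeg_le => i; rewrite leq_subr.
by apply: leq_trans ha; rewrite -e; apply: mdeg_le => i; exact: hb.
Qed.

Lemma congD d p p' q q' : cong d p p' -> cong d q q' -> cong d (p + q) (p' + q').
Proof. by move=> hp hq a ha; rewrite !mcoeffD hp ?hq. Qed.

Lemma congB d p p' q q' : cong d p p' -> cong d q q' -> cong d (p - q) (p' - q').
Proof. by move=> hp hq a ha; rewrite !mcoeffB hp ?hq. Qed.

Lemma cong_refl d p : cong d p p. Proof. by []. Qed.
Arguments cong_refl : clear implicits.
Lemma cong_sym d p q : cong d p q -> cong d q p.
Proof. by move=> h a ha; rewrite h. Qed.
Lemma cong_trans d p q r : cong d p q -> cong d q r -> cong d p r.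
Proof. by move=> h1 h2 a ha; rewrite h1 ?h2. Qed.

Lemma cong_prod d (I : Type) (s : seq I) (F G : I -> poly) :
  (forall i, cong d (F i) (G i)) -> cong d (\prod_(i <- s) F i) (\prod_(i <- s) G i).
Proof.
move=> h; apply: (big_ind2 (cong d)) => //; last by move=> *; exact: congM.
Qed.

Lemma cong_sum d (I : Type) (s : seq I) (F G : I -> poly) :
  (forall i, cong d (F i) (G i)) -> cong d (\sum_(i <- s) F i) (\sum_(i <- s) G i).
Proof.
move=> h; apply: (big_ind2 (cong d)) => //; last by move=> *; exact: congD.
Qed.

Lemma cong_low i j p q : cong i p 0 -> cong j q 0 -> cong (i + j).+1 (p * q) 0.
Proof.
move=> hp hq a ha; rewrite mcoeff0 -(tofK a) coefM big1 // => b /forallP hb.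
have e : (\sum_i tof a i)%N = mdeg a by rewrite -mdeg_tom tofK.
have es := etrans (mdeg_split hb) e.
case: (leqP (mdeg (tom [ffun i0 => nat_of_ord (b i0)])) i) => h1.
  by rewrite hp ?mcoeff0 ?mul0r.
rewrite hq ?mcoeff0 ?mulr0 //.
move: ha h1; rewrite -es; move: (mdeg _) (mdeg _) => x y; lia.
Qed.

Lemma cong_pow d p : p@_0%MM = 0 -> cong d (p ^+ d.+1) 0.
Proof.
move=> h0; have h : cong 0 p 0.
  move=> a; rewrite leqn0 mdeg_eq0 => /eqP ->; by rewrite h0 mcoeff0.
elim: d => [|d ih]; first by rewrite expr1.
by rewrite exprS; exact: (cong_low h ih).
Qed.

Definition P (d : nat) (f : series S) : poly :=
  \sum_(k : 'X_{1..S < d.+1}) f (tof k) *: 'X_[bmnm k].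

Lemma Pcoef d f a : (mdeg a <= d)%N -> (P d f)@_a = f (tof a).
Proof.
move=> ha; rewrite /P raddf_sum /=.
have ha' : (mdeg a < d.+1)%N by [].
rewrite (bigD1 (BMultinom ha')) //= mcoeffZ mcoeffX eqxx mulr1 big1 ?addr0 //.
move=> k hk; rewrite mcoeffZ mcoeffX; case: eqP => [e|]; last by rewrite mulr0.
by move/negP: hk; case; apply/eqP/val_inj.
Qed.

Lemma P_mul d f g : cong d (P d (ps_mul f g)) (P d f * P d g).
Proof.
move=> a ha; rewrite Pcoef //.
have e : (\sum_i tof a i)%N = mdeg a by rewrite -mdeg_tom tofK.
set a' := tof a; rewrite -[a in RHS](tofK a) -/a' coefM /ps_mul.
apply: eq_bigr => b /forallP hb.
rewrite !Pcoef ?tomK //.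
  by apply: leq_trans ha; rewrite -e; apply: mdeg_le => i; rewrite leq_subr.
by apply: leq_trans ha; rewrite -e; apply: mdeg_le => i; exact: hb.
Qed.

Lemma tof_inj : injective tof. Proof. exact: can_inj tofK. Qed.

Lemma P_ext d f g : (forall a, (mdeg a <= d)%N -> f (tof a) = g (tof a)) ->
  cong d (P d f) (P d g).
Proof. by move=> h a ha; rewrite !Pcoef // h. Qed.

Lemma P_one d : cong d (P d (@ps_one S)) 1.
Proof.
move=> a ha; rewrite Pcoef // mcoeff1 /ps_one; congr (_%:R).
have -> : [ffun=> 0%N] = tof 0%MM by apply/ffunP => i; rewrite !ffunE mnm0E.
by rewrite (inj_eq tof_inj).
Qed.

Lemma P_X d i : cong d (P d (ps_X i)) 'X_i.
Proof.
move=> a ha; rewrite Pcoef // mcoeffX /ps_X; congr (_%:R).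
have -> : [ffun j => ((j == i) : nat)] = tof U_(i)%MM.
  by apply/ffunP => j; rewrite !ffunE mnm1E eq_sym.
by rewrite (inj_eq tof_inj) eq_sym.
Qed.

Lemma P_sub d f g : cong d (P d (ps_sub f g)) (P d f - P d g).
Proof. by move=> a ha; rewrite mcoeffB !Pcoef. Qed.

Lemma P_add d f g : cong d (P d (ps_add f g)) (P d f + P d g).
Proof. by move=> a ha; rewrite mcoeffD !Pcoef. Qed.

Lemma P_zero d : cong d (P d (@ps_zero S)) 0.
Proof. by move=> a ha; rewrite mcoeff0 !Pcoef. Qed.

Lemma P_prod d (I : Type) (s : seq I) (F : I -> series S) (G : I -> poly) :
  (forall x, cong d (P d (F x)) (G x)) ->
  cong d (P d (ps_prod [seq F x | x <- s])) (\prod_(x <- s) G x).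
Proof.
move=> h; elim: s => [|x s ih]; first by rewrite big_nil; exact: P_one.
rewrite big_cons; exact: (cong_trans (@P_mul d (F x) _) (congM (h x) ih)).
Qed.

Lemma P_sum d (I : Type) (s : seq I) (F : I -> series S) (G : I -> poly) :
  (forall x, cong d (P d (F x)) (G x)) ->
  cong d (P d (ps_sum [seq F x | x <- s])) (\sum_(x <- s) G x).
Proof.
move=> h; elim: s => [|x s ih]; first by rewrite big_nil; exact: P_zero.
rewrite big_cons; exact: (cong_trans (@P_add d (F x) _) (congD (h x) ih)).
Qed.

Definition Xprod : poly := \prod_(i <- enum 'I_S) 'X_i.
Definition Ysum : poly := \sum_(i <- enum 'I_S) 'X_i.
Definition Dpoly : poly := \prod_(i <- enum 'I_S) (1 - 'X_i) * (1 - Ysum).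

Lemma P_num d : cong d (P d (@FB_num S)) Xprod.
Proof. by apply: P_prod => i; exact: P_X. Qed.

Lemma P_den d : cong d (P d (@FB_den S)) Dpoly.
Proof.
apply: cong_trans (@P_mul _ _ _) _; apply: congM.
  apply: P_prod => i; apply: cong_trans (@P_sub _ _ _) _.
  by apply: congB; [exact: P_one | exact: P_X].
apply: cong_trans (@P_sub _ _ _) _; apply: congB; first exact: P_one.
by apply: P_sum => i; exact: P_X.
Qed.

Definition geom (d : nat) (Z : poly) : poly := \sum_(k < d.+1) Z ^+ k.
Definition Qd (d : nat) : poly := \prod_(i <- enum 'I_S) geom d 'X_i * geom d Ysum.

Lemma X0 i : ('X_i : poly)@_0%MM = 0.
Proof.
rewrite mcoeffX; case: eqP => // /mnmP /(_ i); by rewrite mnm1E mnm0E eqxx.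
Qed.

Lemma Ysum0 : Ysum@_0%MM = 0.
Proof. by rewrite /Ysum raddf_sum big1 // => i _; exact: X0. Qed.

Lemma geom_inv d Z : Z@_0%MM = 0 -> cong d ((1 - Z) * geom d Z) 1.
Proof.
move=> h0; have -> : (1 - Z) * geom d Z = 1 - Z ^+ d.+1.
  by rewrite /geom -opprB mulNr -subrX1 opprB.
rewrite -[X in cong _ _ X]subr0; apply: congB => //; exact: cong_pow.
Qed.

Lemma DQ d : cong d (Dpoly * Qd d) 1.
Proof.
have -> : Dpoly * Qd d =
  (\prod_(i <- enum 'I_S) ((1 - 'X_i) * geom d 'X_i)) * ((1 - Ysum) * geom d Ysum).
  by rewrite /Dpoly /Qd big_split /=; rewrite mulrACA.
rewrite -[X in cong _ _ X]mulr1; apply: congM.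
  apply: (big_ind (fun p => cong d p 1)) => //.
    by move=> x y hx hy; rewrite -(mulr1 1); exact: congM.
  move=> i _; apply: geom_inv; exact: X0.
apply: geom_inv; exact: Ysum0.
Qed.

Lemma cong_pow_ge e k Z : Z@_0%MM = 0 -> (e < k)%N -> cong e (Z ^+ k) 0.
Proof.
move=> h0 hk; rewrite -(subnKC hk) exprD -(mul0r (Z ^+ (k - e.+1))).
by apply: congM => //; exact: cong_pow.
Qed.

Lemma geom_mono e d Z : Z@_0%MM = 0 -> (e <= d)%N -> cong e (geom d Z) (geom e Z).
Proof.
move=> h0 hed; rewrite /geom -!(big_mkord xpredT (fun k => Z ^+ k)).
rewrite (big_cat_nat (n := e.+1)) //=.
rewrite -[X in cong _ _ X]addr0; apply: congD => //.
rewrite big_seq; apply: (big_ind (fun p => cong e p 0)) => //.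
  by move=> x y hx hy; rewrite -(addr0 0); exact: congD.
move=> k; rewrite mem_index_iota => /andP [hk _]; exact: cong_pow_ge.
Qed.

Lemma Q_mono e d : (e <= d)%N -> cong e (Qd d) (Qd e).
Proof.
move=> hed; apply: congM; last by apply: geom_mono => //; exact: Ysum0.
by apply: cong_prod => i; apply: geom_mono => //; exact: X0.
Qed.

Lemma G_uniq (G : series S) : is_FB_expansion G ->
  forall a : mono S, G a = (Xprod * Qd (\sum_i a i))@_(tom a).
Proof.
move=> hG a; set d := (\sum_i a i)%N.
have ha : (mdeg (tom a) <= d)%N by rewrite mdeg_tom.
have h1 : cong d (P d G * Dpoly) Xprod.
  apply: cong_trans (congM (cong_refl d (P d G)) (cong_sym (@P_den d))) _.
  apply: cong_trans (cong_sym (@P_mul d G (@FB_den S))) _.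
  apply: cong_trans (@P_num d); apply: P_ext => b _; exact: hG.
have h2 : cong d (P d G) (Xprod * Qd d).
  rewrite -[P d G]mulr1; apply: cong_trans (congM (cong_refl d _) (cong_sym (@DQ d))) _.
  by rewrite mulrA; apply: congM.
by rewrite -h2 // Pcoef // tomK.
Qed.

Definition G0 : series S := fun a => (Xprod * Qd (\sum_i a i))@_(tom a).

Lemma G0_ok : is_FB_expansion G0.
Proof.
move=> a; set d := (\sum_i a i)%N.
have ha : (mdeg (tom a) <= d)%N by rewrite mdeg_tom.
have h1 : cong d (P d G0) (Xprod * Qd d).
  move=> b hb; rewrite Pcoef // /G0 tofK.
  have -> : (\sum_i tof b i)%N = mdeg b by rewrite -mdeg_tom tofK.
  by apply: esym; apply: (congM (cong_refl _ Xprod) (Q_mono hb)).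
rewrite -(tomK a) -(@Pcoef d) // (@P_mul d) // -/d (congM h1 (@P_den d)) //.
rewrite -mulrA (mulrC (Qd d)) (congM (cong_refl d _) (@DQ d)) // mulr1.
by rewrite -(@P_num d) // Pcoef.
Qed.
End Main.

Lemma Tid (R : comRingType) (x Z : R) M :
  x * \sum_(r < M) x ^+ r * (Z + x) ^+ (M - 1 - r)
  = \sum_(j < M) (Z ^+ j * x ^+ (M - j)) *+ 'C(M, j.+1).
Proof.
elim: M => [|M ih]; first by rewrite !big_ord0 mulr0.
rewrite big_ord_recl /= expr0 mul1r subn0 subSS subn0.
have -> : \sum_(i < M) x ^+ (bump 0 i) * (Z + x) ^+ (M - bump 0 i)
        = x * \sum_(r < M) x ^+ r * (Z + x) ^+ (M - 1 - r).
  rewrite big_distrr /=; apply: eq_bigr => i _.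
  by rewrite /bump /= add1n exprS mulrA subnS -subn1 subnAC.
rewrite mulrDr ih.
under eq_bigr do rewrite binS mulrnDr.
rewrite big_split /= big_ord_recr /= bin_small // mulr0n addr0.
rewrite addrC; congr (_ + _).
  rewrite [Z + x]addrC exprDn big_distrr /=; apply: eq_bigr => i _.
  rewrite mulrnAr; congr (_ *+ _).
  have hi : (i <= M)%N := ltn_ord i.
  by rewrite (subSn hi) exprS [RHS]mulrC mulrA.
rewrite big_distrr /=; apply: eq_bigr => i _.
rewrite mulrnAr; congr (_ *+ _).
by rewrite subSn ?(ltnW (ltn_ord i)) // exprS mulrCA.
Qed.

Section C.
Variable S : nat.
Notation poly := {mpoly rat[S]}.
Notation Y := (@Ysum S).

Lemma Yhomog k : Y ^+ k \is k.-homog.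
Proof.
have h1 : Y \is 1.-homog.
  by rewrite /Ysum; apply: rpred_sum => i _; rewrite dhomogX /= mdeg1.
by have := dhomogMn k h1; rewrite mul1n.
Qed.

Lemma coefYk k (q : 'X_{1..S}) : mdeg q != k -> (Y ^+ k)@_q = 0.
Proof. by move=> h; apply: dhomog_nemf_coeff (Yhomog k) h. Qed.

Lemma coef_geomY d (q : 'X_{1..S}) : (mdeg q <= d)%N -> (geom d Y)@_q = (Y ^+ mdeg q)@_q.
Proof.
move=> hq; rewrite /geom raddf_sum /= (bigD1 (Ordinal (hq : (mdeg q < d.+1)%N))) //=.
rewrite big1 ?addr0 // => k hk; apply: coefYk; apply: contra hk => /eqP e.
by apply/eqP/val_inj; rewrite /= e.
Qed.

Lemma XprodE : Xprod S = \prod_(i < S) ('X_i : poly).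
Proof. by rewrite /Xprod big_enum. Qed.

Lemma monoE (e : 'I_S -> nat) : \prod_(i < S) ('X_i : poly) ^+ e i = 'X_[tom [ffun i => e i]].
Proof. by rewrite mpolyXE_id; apply: eq_bigr => i _; rewrite tomE ffunE. Qed.

Lemma lhs_expand (m : mono S) : let d := (\sum_i m i)%N in
  (Xprod S * Qd S d)@_(tom m) =
  \sum_(c : {ffun 'I_S -> 'I_d.+1})
     (if [forall i, (c i < m i)%N] then
        (Y ^+ (\sum_i (m i - (c i).+1)))@_(tom [ffun i => (m i - (c i).+1)%N])
      else 0).
Proof.
move=> d.
have -> : Xprod S * Qd S d = (\prod_(i < S) ('X_i * geom d 'X_i)) * geom d Y.
  by rewrite /Qd mulrA XprodE big_enum big_split.
have -> : \prod_(i < S) ('X_i * geom d 'X_i) =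
          \sum_(c : {ffun 'I_S -> 'I_d.+1}) 'X_[tom [ffun i => (c i).+1]].
  under eq_bigr do rewrite /geom big_distrr /=.
  rewrite bigA_distr_bigA /=; apply: eq_bigr => c _.
  by rewrite -monoE; apply: eq_bigr => i _; rewrite exprS.
rewrite mulr_suml raddf_sum /=; apply: eq_bigr => c _.
rewrite coefXM.
have -> : (tom [ffun i => (c i).+1] <= tom m)%MM = [forall i, (c i < m i)%N].
  apply/mnm_lepP/forallP => h i; have := h i; by rewrite !tomE ffunE.
case: ifP => // _.
have -> : (tom m - tom [ffun i => (c i).+1])%MM = tom [ffun i => (m i - (c i).+1)%N].
  by apply/mnmP => i; rewrite mnmBE !tomE !ffunE.
rewrite coef_geomY; last by rewrite mdeg_tom /d; apply: leq_sum => i _; rewrite ffunE leq_subr.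
by rewrite mdeg_tom; under eq_bigr do rewrite ffunE.
Qed.

Lemma rhs_expand (m : mono S) : let d := (\sum_i m i)%N in
  (\prod_(i < S) ('X_i * \sum_(r < m i) 'X_i ^+ r * Y ^+ (m i - 1 - r)))@_(tom m) =
  \sum_(c : {ffun 'I_S -> 'I_d.+1})
     (if [forall i, (c i < m i)%N] then
        (Y ^+ (\sum_i (m i - (c i).+1)))@_(tom [ffun i => (m i - (c i).+1)%N])
      else 0).
Proof.
move=> d.
have hd i : (m i <= d.+1)%N.
  by apply: leqW; rewrite /d (bigD1 i) //= leq_addr.
have -> : \prod_(i < S) ('X_i * \sum_(r < m i) 'X_i ^+ r * Y ^+ (m i - 1 - r)) =
   \prod_(i < S) \sum_(c : 'I_d.+1 | (c < m i)%N) (('X_i : poly) ^+ c.+1 * Y ^+ (m i - c.+1)).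
  apply: eq_bigr => i _; rewrite big_distrr /=.
  rewrite (big_ord_widen _ (fun r => ('X_i : poly) * ('X_i ^+ r * Y ^+ (m i - 1 - r))) (hd i)).
  by apply: eq_bigr => c _; rewrite mulrA -exprS -subnDA add1n.
rewrite bigA_distr_big_dep raddf_sum big_mkcond /=; apply: eq_bigr => c _.
have -> : (c \in family (fun i : 'I_S => [pred c0 : 'I_d.+1 | (c0 < m i)%N])) = [forall i, (c i < m i)%N].
  by apply/familyP/forallP.
case: ifP => // /forallP hc.
rewrite big_split /= monoE prodrXr coefXM.
have -> : (tom [ffun i => (c i).+1] <= tom m)%MM.
  by apply/mnm_lepP => i; rewrite !tomE ffunE; exact: hc.
have -> : (tom m - tom [ffun i => (c i).+1])%MM = tom [ffun i => (m i - (c i).+1)%N].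
  by apply/mnmP => i; rewrite mnmBE !tomE !ffunE.
done.
Qed.
End C.

Section D.
Variable S : nat.
Notation poly := {mpoly rat[S]}.
Notation Y := (@Ysum S).

Lemma YsubX i : Y - 'X_i = \sum_(j | j != i) ('X_j : poly).
Proof. by rewrite /Ysum big_enum /= (bigD1 i) //= addrC addrK. Qed.

Lemma E_coef (n : mono S) :
  ((E n)%:R : rat) = (\prod_(i < S) (Y - 'X_i) ^+ n i)@_(tom n).
Proof.
have -> : \prod_(i < S) (Y - 'X_i) ^+ n i =
          \prod_(c : card_t n) (Y - 'X_(tag c)).
  rewrite /card_t -(@sig_big_dep _ _ _ 'I_S (fun i => 'I_(n i)) xpredT (fun _ _ => true) (fun i _ => Y - 'X_i)) /=.
  by apply: eq_bigr => i _; rewrite prodr_const card_ord.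
under eq_bigr do rewrite YsubX.
rewrite bigA_distr_big_dep raddf_sum /= big_mkcond /=.
have mon f : \prod_(c : card_t n) ('X_(f c) : poly) = 'X_[\sum_(c : card_t n) U_(f c)].
  by rewrite (big_morph (fun m => 'X_[m] : poly) (@mpolyXD _ _) (@mpolyX0 _ _)).
under eq_bigr do rewrite mon mcoeffX.
rewrite /E -sum1_card natr_sum /=; apply/esym.
rewrite [RHS]big_mkcond /=; apply: eq_bigr => f _.
have -> : (f \in family (fun (c : card_t n) (j : 'I_S) => j != tag c)) =
          [forall c, f c != tag c].
  by apply/familyP/forallP.
have -> : ((\sum_c U_(f c))%MM == tom n) =
          [forall j : 'I_S, #|[set c | f c == j]| == n j].
  apply/eqP/forallP => [h j | h].
    rewrite -(tomE n j) -h mnm_sumE -sum1_card big_mkcond /=.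
    by apply/eqP; apply: eq_bigr => c _; rewrite mnm1E inE; case: (f c == j).
  apply/mnmP => j; rewrite tomE mnm_sumE -(eqP (h j)) -sum1_card [RHS]big_mkcond /=.
  by apply: eq_bigr => c _; rewrite mnm1E inE; case: (f c == j).
rewrite inE; by case: [forall c, _]; case: [forall j, _].
Qed.
End D.

Lemma shiftsum (R : nmodType) (F : nat -> R) M D : (M <= D)%N ->
  \sum_(j < M) F j.+1 = \sum_(k < D.+1 | (1 <= k)%N && (k <= M)%N) F k.
Proof.
move=> hMD.
under [RHS]eq_bigl do rewrite -ltnS.
rewrite -(@big_ord_widen_cond _ _ _ M.+1 D.+1 (fun k => (0 < k)%N) F) //.
rewrite [RHS]big_mkcond big_ord_recl /= add0r; apply: eq_bigr => i _; done.
Qed.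

Section F.
Variable S : nat.
Notation poly := {mpoly rat[S]}.
Notation Y := (@Ysum S).

Lemma main_coef (m : mono S) : (forall i, (0 < m i)%N) ->
  (Xprod S * Qd S (\sum_i m i))@_(tom m) = (B m)%:R.
Proof.
move=> hm; rewrite lhs_expand -rhs_expand.
set d := (\sum_i m i)%N.
have hd i : (m i <= d)%N by rewrite /d (bigD1 i) //= leq_addr.
have -> : \prod_(i < S) ('X_i * \sum_(r < m i) 'X_i ^+ r * Y ^+ (m i - 1 - r)) =
  \prod_(i < S) \sum_(k < d.+1 | (1 <= k)%N && (k <= m i)%N)
     (((Y - 'X_i) ^+ k.-1 * ('X_i : poly) ^+ (m i - k.-1)) *+ 'C(m i, k)).
  apply: eq_bigr => i _.
  have e : Y = (Y - 'X_i) + 'X_i by rewrite subrK.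
  rewrite {1}e Tid.
  by rewrite (shiftsum (fun k => ((Y - 'X_i) ^+ k.-1 * ('X_i : poly) ^+ (m i - k.-1)) *+ 'C(m i, k)) (hd i)).
rewrite bigA_distr_big_dep raddf_sum /= /B natr_sum.
apply: eq_big => [k|k hk].
  by apply/familyP/forallP.
have {}hk : forall i, (1 <= k i)%N && (k i <= m i)%N by move/familyP: hk.
rewrite prodrMn big_split /= monoE mcoeffMn.
have -> : tom m = (tom [ffun i => (m i - (k i).-1)%N] + tom [ffun i => (k i).-1])%MM.
  apply/mnmP => i; rewrite mnmDE !tomE !ffunE subnK //.
  by case/andP: (hk i) => _ h; apply: leq_trans h; exact: leq_pred.
rewrite mcoeffMX natrM mulrC mulr_natr; congr (_ *+ _).
rewrite E_coef; congr (_@__); apply: eq_bigr => i _; by rewrite ffunE.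
Qed.
End F.

Theorem mainTheorem11 (S : nat) (m : {ffun 'I_S -> nat}) :
  (forall i, (0 < m i)%N) ->
  (exists G : series S, is_FB_expansion G) /\
  (forall G : series S, is_FB_expansion G -> G m = ((B m)%:R)%R).
Proof.
move=> hm; split; first by exists (@G0 S); exact: G0_ok.
move=> G hG; rewrite (G_uniq hG m); exact: main_coef.
Qed.
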